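(* Let $L\ge 2$ be an integer, $\delta>0$, and let $\mathscr A_{L,\delta}:=\{(2j-L-1)\delta: j=1,\dots,L\}$ (the arithmetic progression of length $L$, spacing $2\delta$, symmetric about $0$). Let $H=I-\tilde H$ be an $m\times m$ matrix where $\tilde H$ is strictly lower triangular, and let $\mu\ge0$ satisfy $\|\tilde H\|_{\infty\to\infty}+\mu/\delta\le L$. Then there exists a map $Q:[-\mu,\mu]^m\to\mathscr A_{L,\delta}^m$ (computable by a recursive algorithm that determines $q_n$ from $y_1,\dots,y_n$ and $q_1,\dots,q_{n-1}$) such that for every $y\in[-\mu,\mu]^m$, with $q:=Q(y)$, the vector $u:=H^{-1}(y-q)$ satisfies $y-q=Hu$ and $\|u\|_\infty\le\delta$.
   Context: $\|A\|_{\infty\to\infty}$ denotes the operator norm of $A$ from $\ell^\infty$ to $\ell^\infty$ (maximum absolute row sum). Since $H$ is lower triangular with unit diagonal, it is invertible. *)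

(* Defs.v *)
From HB Require Import structures.
From mathcomp Require Import all_boot all_order all_algebra.
Set Implicit Arguments. Unset Strict Implicit. Unset Printing Implicit Defensive.
Import Order.TTheory GRing.Theory Num.Theory.
Local Open Scope ring_scope.

Definition opnorm_inf (R : realFieldType) (m : nat) (A : 'M[R]_m) : R :=
  \big[Num.max/0]_(i < m) \sum_(j < m) `|A i j|.

Definition vnorm_inf (R : realFieldType) (m : nat) (u : 'cV[R]_m) : R :=
  \big[Num.max/0]_(i < m) `|u i 0|.

Definition in_alphabet (R : realFieldType) (L : nat) (delta a : R) : Prop :=
  exists j : 'I_L, a = ((2 * j.+1)%:R - L%:R - 1) * delta.

Definition strictly_lower (R : realFieldType) (m : nat) (A : 'M[R]_m) : Prop :=
  forall i j : 'I_m, (i <= j)%N -> A i j = 0.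

Definition in_box (R : realFieldType) (m : nat) (mu : R) (y : 'cV[R]_m) : Prop :=
  forall i : 'I_m, - mu <= y i 0 <= mu.

(* Main.v *)
Require Import Defs.
From HB Require Import structures.
From mathcomp Require Import all_boot all_order all_algebra.
From mathcomp Require Import lra.
Set Implicit Arguments. Unset Strict Implicit.
Import Order.TTheory GRing.Theory Num.Theory.
Local Open Scope ring_scope.

Definition aval (R : realFieldType) (L : nat) (delta : R) (j : nat) : R :=
  ((2 * j.+1)%:R - L%:R - 1) * delta.

Definition rnd (R : realFieldType) (L : nat) (delta v : R) : R :=
  match [pick j : 'I_L | `|v - aval L delta j| <= delta] with
  | Some j => aval L delta j
  | None => aval L delta 0
  end.

Lemma rnd_alph (R : realFieldType) (L : nat) (delta v : R) :
  (0 < L)%N -> in_alphabet L delta (rnd L delta v).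
Proof.
move=> hL; rewrite /rnd; case: pickP => [j _|_].
  by exists j.
by exists (Ordinal hL).
Qed.

Lemma cover_ex (R : realFieldType) (L : nat) (delta v : R) :
  0 < delta -> - (L%:R * delta) <= v ->
  forall n : nat, exists j : nat, [/\ (j <= n)%N,
     ((2 * j)%:R - L%:R) * delta <= v &
     (j = n \/ v <= ((2 * j)%:R + 2 - L%:R) * delta)].
Proof.
move=> hd hv; elim=> [|n [j [hjn h1 h2]]].
  exists 0%N; split => //; first by rewrite muln0 sub0r mulNr. by left.
have [hlt|hge] := ltnP j n.
  exists j; split => //; first by apply: leqW.
  case: h2 => [e|]; [by move: hlt; rewrite e ltnn | by right].
have ejn : j = n by apply/eqP; rewrite eqn_leq hjn hge.
have [hle|hgt] := lerP v (((2 * j)%:R + 2 - L%:R) * delta).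
  by exists j; split => //; [apply: leqW | right].
exists n.+1; split => //; last by left.
rewrite -ejn mulnS natrD.
have -> : (2%:R : R) = 2 by [].
lra.
Qed.

Lemma rnd_close (R : realFieldType) (L : nat) (delta v : R) :
  (0 < L)%N -> 0 < delta -> `|v| <= L%:R * delta ->
  `|v - rnd L delta v| <= delta.
Proof.
move=> hL hd hv.
have [j hj] : exists j : 'I_L, `|v - aval L delta j| <= delta.
  move: hv; rewrite ler_norml => /andP [hv1 hv2].
  have [j [hjn h1 h2]] := cover_ex hd hv1 L.-1.
  have hjL : (j < L)%N by rewrite (leq_ltn_trans hjn) // prednK.
  exists (Ordinal hjL) => /=.
  have h3 : v <= ((2 * j)%:R + 2 - L%:R) * delta.
    case: h2 => // ->.
    suff -> : ((2 * L.-1)%:R + 2 - L%:R : R) = L%:R by [].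
    have : (2 * L.-1 + 2 = 2 * L)%N by rewrite -mulnSr prednK.
    move=> /(congr1 (fun k : nat => k%:R : R)) E.
    rewrite natrD in E. rewrite natrM in E. rewrite natrM in E. rewrite natrM.
    move: E; have -> : (2%:R : R) = 2 by [].
    move=> E; lra.
  rewrite ler_norml /aval mulnS natrD natrM.
  move: h1 h3; rewrite natrM; have -> : (2%:R : R) = 2 by [].
  move=> h1 h3; apply/andP; split; lra.
rewrite /rnd; case: pickP => [k hk|/(_ j)]; first by [].
by rewrite hj.
Qed.

Definition vv (R : realFieldType) (m : nat) (Ht : 'M[R]_m) (y w : 'cV[R]_m)
  (i : 'I_m) : R := y i 0 + \sum_k Ht i k * w k 0.

Definition nv (R : realFieldType) (L : nat) (delta : R) (m : nat) (Ht : 'M[R]_m)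
  (y w : 'cV[R]_m) (i : 'I_m) : R :=
  vv Ht y w i - rnd L delta (vv Ht y w i).

Fixpoint W (R : realFieldType) (L : nat) (delta : R) (m : nat) (Ht : 'M[R]_m)
  (y : 'cV[R]_m) (n : nat) : 'cV[R]_m :=
  match n with
  | 0 => 0
  | n'.+1 => \col_i (if (i == n' :> nat) then nv L delta Ht y (W L delta Ht y n') i
                     else W L delta Ht y n' i 0)
  end.

Lemma vv_ext (R : realFieldType) (m : nat) (Ht : 'M[R]_m) (y y' w w' : 'cV[R]_m)
  (i : 'I_m) : strictly_lower Ht -> y i 0 = y' i 0 ->
  (forall k : 'I_m, (k < i)%N -> w k 0 = w' k 0) -> vv Ht y w i = vv Ht y' w' i.
Proof.
move=> hHt hy hw; rewrite /vv hy; congr (_ + _); apply: eq_bigr => k _.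
have [hki|hik] := ltnP k i; first by rewrite hw.
by rewrite hHt // !mul0r.
Qed.

Lemma nv_ext (R : realFieldType) (L : nat) (delta : R) (m : nat) (Ht : 'M[R]_m)
  (y y' w w' : 'cV[R]_m)
  (i : 'I_m) : strictly_lower Ht -> y i 0 = y' i 0 ->
  (forall k : 'I_m, (k < i)%N -> w k 0 = w' k 0) ->
  nv L delta Ht y w i = nv L delta Ht y' w' i.
Proof. by move=> h1 h2 h3; rewrite /nv (vv_ext h1 h2 h3). Qed.

Lemma W_inv (R : realFieldType) (L : nat) (delta : R) (m : nat) (Ht : 'M[R]_m)
  (y : 'cV[R]_m) : strictly_lower Ht -> forall n (i : 'I_m),
  W L delta Ht y n i 0 = if (i < n)%N then nv L delta Ht y (W L delta Ht y n) i else 0.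
Proof.
move=> hHt; elim=> [|n IH] i /=; first by rewrite mxE.
have ext : forall i' : 'I_m, (i' <= n)%N ->
    nv L delta Ht y (W L delta Ht y n) i' =
    nv L delta Ht y (\col_i0 (if (i0 == n :> nat) then nv L delta Ht y (W L delta Ht y n) i0
                     else W L delta Ht y n i0 0)) i'.
  move=> i' hi'; apply: nv_ext => // k hk; rewrite mxE; case: eqP => // e.
  by move: (leq_trans hk hi'); rewrite e ltnn.
rewrite mxE; case: eqP => [e|ne].
  by rewrite ltnS e leqnn ext // e.
rewrite IH ltnS; case: (ltngtP i n) => hi.
- by rewrite ext ?(ltnW hi).
- by [] || rewrite leqNgt hi.
- by case: ne.
Qed.

Lemma W_caus (R : realFieldType) (L : nat) (delta : R) (m : nat) (Ht : 'M[R]_m)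
  (y y' : 'cV[R]_m) (n : 'I_m) : strictly_lower Ht ->
  (forall k : 'I_m, (k <= n)%N -> y k 0 = y' k 0) ->
  forall j (i : 'I_m), (i <= n)%N -> W L delta Ht y j i 0 = W L delta Ht y' j i 0.
Proof.
move=> hHt hy; elim=> [|j IH] i hi /=; first by rewrite !mxE.
rewrite !mxE; case: ifP => _; last by rewrite IH.
apply: nv_ext => //; first by rewrite hy.
by move=> k hk; rewrite IH //; exact: leq_trans (ltnW hk) hi.
Qed.

Theorem proposition1 (R : realFieldType) (L m : nat) (delta mu : R)
  (Ht : 'M[R]_m)
  (hL : (2 <= L)%N) (hdelta : 0 < delta) (hmu : 0 <= mu)
  (hHt : strictly_lower Ht)
  (hnorm : opnorm_inf Ht + mu / delta <= L%:R) :
  let H := 1%:M - Ht in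
  exists Q : 'cV[R]_m -> 'cV[R]_m,
    (* causality: q_n depends only on y_1, ..., y_n *)
    (forall y y' : 'cV[R]_m, in_box mu y -> in_box mu y' ->
       forall n : 'I_m, (forall k : 'I_m, (k <= n)%N -> y k 0 = y' k 0) ->
       Q y n 0 = Q y' n 0) /\
    (forall y : 'cV[R]_m, in_box mu y ->
       let q := Q y in
       let u := invmx H *m (y - q) in
       (forall i : 'I_m, in_alphabet L delta (q i 0)) /\
       y - q = H *m u /\ vnorm_inf u <= delta).
Proof.
move=> H.
have hL0 : (0 < L)%N by apply: leq_trans hL.
exists (fun y => \col_i rnd L delta (vv Ht y (W L delta Ht y m) i)).
split.
  move=> y y' _ _ n hy; rewrite !mxE; congr (rnd _ _ _).
  apply: vv_ext => //; first by rewrite hy.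
  by move=> k hk; rewrite (W_caus _ _ hHt hy _ (ltnW hk)).
move=> y hy q u.
set w := W L delta Ht y m.
have wfix : forall i : 'I_m, w i 0 = nv L delta Ht y w i.
  by move=> i; rewrite /w W_inv // ltn_ord.
have hmu' : mu + opnorm_inf Ht * delta <= L%:R * delta.
  have : (opnorm_inf Ht + mu / delta) * delta <= L%:R * delta.
    by rewrite ler_wpM2r // ltW.
  by rewrite mulrDl divfK ?gt_eqF // addrC.
have hop : forall i : 'I_m, \sum_k `|Ht i k| <= opnorm_inf Ht.
  by move=> i; rewrite /opnorm_inf; apply: (le_bigmax _ (fun i => \sum_k `|Ht i k|)).
have wbound : forall i : 'I_m, `|w i 0| <= delta.
  suff : forall n (i : 'I_m), (i < n)%N -> `|w i 0| <= delta.
    by move=> h i; apply: (h i.+1).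
  elim=> [|n IH] i //; rewrite ltnS => hin.
  rewrite wfix /nv; apply: rnd_close => //.
  rewrite /vv; apply: (le_trans (ler_normD _ _)).
  apply: (le_trans _ hmu'); apply: lerD.
    by rewrite ler_norml; case/andP: (hy i) => -> ->.
  apply: (le_trans (ler_norm_sum _ _ _)).
  apply: (@le_trans _ _ ((\sum_k `|Ht i k|) * delta)); last first.
    by rewrite ler_wpM2r // ltW.
  rewrite mulr_suml; apply: ler_sum => k _; rewrite normrM.
  have [hki|hik] := ltnP k i.
    by rewrite ler_wpM2l // IH // (leq_trans hki).
  by rewrite hHt // normr0 !mul0r.
have hyq : y - q = H *m w.
  apply/matrixP => i j; rewrite (ord1 j) /H mulmxBl mul1mx !mxE.
  rewrite -/w [w i 0]wfix /nv /vv.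
  set r := rnd _ _ _; set s := \sum_k _.
  by rewrite addrAC addrK.
have hunit : H \in unitmx.
  rewrite unitmxE det_trig.
    by rewrite big1 ?unitr1 // => i _; rewrite /H !mxE eqxx hHt // subr0.
  apply/is_trig_mxP => i j hij; rewrite /H !mxE hHt ?(ltnW hij) //.
  by rewrite subr0; case: eqP hij => // ->; rewrite ltnn.
have uw : u = w by rewrite /u hyq mulmxA mulVmx // mul1mx.
split; first by move=> i; rewrite mxE; apply: rnd_alph.
split; first by rewrite uw.
rewrite uw /vnorm_inf; apply: bigmax_le; first exact: ltW.
by move=> i _; apply: wbound.
Qed.
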